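(* For integers $m\ge1$ let $f_m(x)=\frac{(m-x)^{m-1}}{e^{m-x}(m-1)!}$ for $x\le m$ and $f_m(x)=0$ for $x>m$, and for integers $m\ge2$ and real $z\ge0$ let $b(m,z)$ be the unique real number with $0\le b(m,z)\le z$ and $f_m(1-z)=f_m(1+z-b(m,z))$. There is an absolute constant $C>0$ such that the following holds. Suppose $n\ge100$ is an integer, $1\le w\le\frac n{10}$, $b=b(n+1,w)$ and $0\le\xi\le1$. (i) If $h$ is an integer with $w^{3/2}\le h\le n$, then $$|f_h(1+w-b-\xi)-f_h(1-w-\xi)|\le C\Big(\frac wh+\frac{w^3}{h^2}\Big)f_h(1-w).$$ (ii) If $2\sqrt n\le w\le \frac n{10}$ and $k$ is an integer with $1\le k\le n-3w$, then each of $f_{n+1-k}(1+w-b-\xi)$ and $f_{n+1-k}(1-w-\xi)$ is of the form $$f_{n+1}(1-w)\exp\Big\{\sum_{j=n-k}^{n}\Big(\frac1{2j}\Big(1-\frac{w^2}{j}\Big)+\theta_j\,C\frac{w^3}{j^3}\Big)+\theta\,C\frac wn\Big\}$$ for some real numbers $\theta_j$ ($n-k\le j\le n$) and $\theta$ with $|\theta_j|\le1$, $|\theta|\le1$.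
   Context: $f_m$ is the density of $X_1+\cdots+X_m$, where the $X_i$ are independent with density $e^{x-1}$ for $x\le 1$ and $0$ for $x>1$. *)

(* Defs.v *)
From Stdlib Require Import Reals Factorial.
Open Scope R_scope.

Definition fm (m : nat) (x : R) : R :=
  if Rle_dec x (INR m)
  then (INR m - x) ^ (m - 1) / (exp (INR m - x) * INR (fact (m - 1)))
  else 0.

Definition is_b (m : nat) (z b : R) : Prop :=
  0 <= b <= z /\ fm m (1 - z) = fm m (1 + z - b).

(* sum over j = a, ..., c (inclusive) *)
Definition sum_range (a c : nat) (g : nat -> R) : R := sum_f a c g.

(* Main.v *)
Require Import Defs.
From Stdlib Require Import Reals Lra Lia Psatz Factorial.
From Coquelicot Require Import Coquelicot.
Open Scope R_scope.

Definition gl (s : R) := ln (1 + s) - s + s ^ 2 / 2.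

Lemma gl_mvt s : -1 < s -> s <> 0 ->
  exists c, gl s = c ^ 2 / (1 + c) * s /\ Rabs c <= Rabs s /\ (0 < s -> 0 < c) /\ -1 < c.
Proof.
  intros Hs Hs0.
  assert (D : forall c, -1 < c -> derivable_pt_lim gl c (c ^ 2 / (1 + c))).
  { intros c Hc. apply is_derive_Reals. unfold gl.
    auto_derive. lra. field. lra. }
  destruct (Rlt_or_le 0 s) as [Hp|Hn].
  - destruct (MVT_cor2 gl (fun c => c ^ 2 / (1 + c)) 0 s Hp) as [c [E Hc]].
    { intros c Hc. apply D. lra. }
    exists c. assert (gl 0 = 0) by (unfold gl; rewrite Rplus_0_r, ln_1; lra).
    split; [lra|]. split; [rewrite !Rabs_right by lra; lra|]. lra.
  - assert (Hn' : s < 0) by lra.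
    destruct (MVT_cor2 gl (fun c => c ^ 2 / (1 + c)) s 0 Hn') as [c [E Hc]].
    { intros c Hc. apply D. lra. }
    exists c. assert (gl 0 = 0) by (unfold gl; rewrite Rplus_0_r, ln_1; lra).
    split; [lra|]. split; [rewrite !Rabs_left by lra; lra|]. lra.
Qed.

Lemma ln_ge s : 0 <= s -> s - s ^ 2 / 2 <= ln (1 + s).
Proof.
  intros Hs. destruct (Req_dec s 0) as [->|Hs0].
  - rewrite Rplus_0_r, ln_1. lra.
  - destruct (gl_mvt s) as [c [E [_ [Hc _]]]]; try lra.
    unfold gl in E. assert (0 < c) by lra.
    assert (0 <= c ^ 2 / (1 + c) * s).
    { apply Rmult_le_pos; [|lra]. apply Rdiv_le_0_compat; [nra|lra]. }
    lra.
Qed.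

Lemma ln_le_id s : -1 < s -> ln (1 + s) <= s.
Proof.
  intros Hs. rewrite <- (ln_exp s) at 2. apply ln_le; [lra|]. apply exp_ineq1_le.
Qed.

Lemma ln_taylor s : -1/2 <= s <= 1/2 -> Rabs (ln (1 + s) - s + s ^ 2 / 2) <= 2 * Rabs s ^ 3.
Proof.
  intros Hs. destruct (Req_dec s 0) as [->|Hs0].
  - rewrite Rplus_0_r, ln_1, Rabs_R0. replace (0 - 0 + 0 ^ 2 / 2) with 0 by field.
    rewrite Rabs_R0; lra.
  - destruct (gl_mvt s) as [c [E [Hc [_ Hc1]]]]; try lra.
    unfold gl in E. rewrite E.
    assert (Rabs s <= 1/2) by (apply Rabs_le; lra).
    assert (1/2 <= 1 + c).
    { assert (Rabs c <= 1/2) by lra. apply Rabs_le_between in H0. lra. }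
    rewrite Rabs_mult. rewrite Rabs_right with (r := c ^ 2 / (1 + c)).
    2:{ apply Rle_ge, Rdiv_le_0_compat; [nra|lra]. }
    assert (c ^ 2 / (1 + c) <= 2 * Rabs s ^ 2).
    { apply Rle_trans with (c ^ 2 / (1/2)).
      - apply Rmult_le_compat_l; [nra|]. apply Rinv_le_contravar; lra.
      - rewrite <- (pow2_abs c).
        assert (0 <= Rabs c) by apply Rabs_pos. 
        assert (Rabs c ^ 2 <= Rabs s ^ 2) by (apply pow_incr; lra). lra. }
    assert (0 <= Rabs s) by apply Rabs_pos.
    nra.
Qed.

Definition Psi (M : nat) (y : R) :=
  INR M * ln (INR M + y) - (INR M + y) - ln (INR (fact M)).

Lemma fact_pos M : 0 < INR (fact M).
Proof. apply lt_0_INR. apply lt_O_fact. Qed.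

Lemma fm_S M x : x <= INR (S M) ->
  fm (S M) x = (INR (S M) - x) ^ M / (exp (INR (S M) - x) * INR (fact M)).
Proof.
  intros H. unfold fm. destruct (Rle_dec x (INR (S M))); [|lra].
  replace (S M - 1)%nat with M by lia. reflexivity.
Qed.

Lemma fm_repr M y : 0 < INR M + y -> fm (S M) (1 - y) = exp (Psi M y).
Proof.
  intros H. rewrite fm_S by (rewrite S_INR; lra).
  replace (INR (S M) - (1 - y)) with (INR M + y) by (rewrite S_INR; ring).
  rewrite <- Rpower_pow by lra. unfold Rpower, Psi.
  unfold Rminus. rewrite !exp_plus, !exp_Ropp, exp_ln by apply fact_pos.
  rewrite ?exp_plus. field.
  all: repeat split; apply Rgt_not_eq; try apply exp_pos; apply fact_pos.
Qed.

Lemma fm_nonneg h x : fm h x >= 0.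
Proof.
  unfold fm. destruct (Rle_dec x (INR h)); [|lra].
  apply Rle_ge, Rdiv_le_0_compat. apply pow_le; lra.
  apply Rmult_lt_0_compat. apply exp_pos. apply lt_0_INR, lt_O_fact.
Qed.

Lemma exp_pow a n : exp a ^ n = exp (INR n * a).
Proof.
  induction n. simpl. rewrite Rmult_0_l, exp_0; ring.
  rewrite S_INR. simpl. rewrite IHn. rewrite <- exp_plus. f_equal; ring.
Qed.

Lemma fm_le_1 M x : fm (S M) x <= fm (S M) 1.
Proof.
  assert (H1 : fm (S M) 1 = INR M ^ M / (exp (INR M) * INR (fact M))).
  { rewrite fm_S by (rewrite S_INR; pose proof (pos_INR M); lra).
    replace (INR (S M) - 1) with (INR M) by (rewrite S_INR; ring). reflexivity. }
  destruct (Rle_dec x (INR (S M))) as [Hx|Hx].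
  2:{ unfold fm at 1. destruct (Rle_dec x (INR (S M))); [lra|].
      pose proof (fm_nonneg (S M) 1). lra. }
  rewrite fm_S by lra. rewrite H1. set (t := INR (S M) - x).
  assert (Ht : 0 <= t) by (unfold t; lra).
  pose proof (fact_pos M).
  unfold Rdiv. rewrite !Rinv_mult.
  assert (t ^ M * / exp t <= INR M ^ M * / exp (INR M)).
  { destruct M as [|M'].
    - simpl. rewrite exp_0, Rinv_1, !Rmult_1_l.
      pose proof (exp_ineq1_le t). rewrite <- Rinv_1. apply Rinv_le_contravar; lra.
    - set (M := S M'). assert (HM : 0 < INR M) by (apply lt_0_INR; unfold M; lia).
      assert (E1 : t / INR M <= exp (t / INR M - 1)).
      { pose proof (exp_ineq1_le (t / INR M - 1)). lra. }
      assert (E2 : (t / INR M) ^ M <= exp (t / INR M - 1) ^ M).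
      { apply pow_incr. split; [apply Rdiv_le_0_compat; lra| exact E1]. }
      rewrite exp_pow in E2.
      replace (INR M * (t / INR M - 1)) with (t + - INR M) in E2 by (field; lra).
      rewrite exp_plus, exp_Ropp in E2.
      assert (E3 : t ^ M = (t / INR M) ^ M * INR M ^ M).
      { rewrite <- Rpow_mult_distr. f_equal. field. lra. }
      rewrite E3. pose proof (exp_pos t). pose proof (exp_pos (INR M)).
      assert (0 < INR M ^ M) by (apply pow_lt; lra).
      apply Rle_trans with (exp t * / exp (INR M) * INR M ^ M * / exp t).
      + apply Rmult_le_compat_r. left; apply Rinv_0_lt_compat; lra.
        apply Rmult_le_compat_r; lra.
      + right. field. lra. }
  assert (0 < / INR (fact M)) by (apply Rinv_0_lt_compat; lra).
  nra.
Qed.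

Lemma fm_1_le M w : 0 <= w -> fm (S M) 1 <= exp w * fm (S M) (1 - w).
Proof.
  intros Hw. pose proof (pos_INR M).
  rewrite !fm_S by (rewrite S_INR; lra).
  replace (INR (S M) - 1) with (INR M) by (rewrite S_INR; ring).
  replace (INR (S M) - (1 - w)) with (INR M + w) by (rewrite S_INR; ring).
  rewrite exp_plus. pose proof (fact_pos M). pose proof (exp_pos w). pose proof (exp_pos (INR M)).
  assert (INR M ^ M <= (INR M + w) ^ M) by (apply pow_incr; lra).
  unfold Rdiv. rewrite !Rinv_mult.
  replace (exp w * ((INR M + w) ^ M * (/ exp (INR M) * / exp w * / INR (fact M))))
    with ((INR M + w) ^ M * (/ exp (INR M) * / INR (fact M))) by (field; lra).
  apply Rmult_le_compat_r; [|lra].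
  apply Rmult_le_pos; left; apply Rinv_0_lt_compat; lra.
Qed.

Definition Phi (M y : R) := M * ln (M + y) - (M + y).

Lemma abs_div_le a b c : 0 < b -> Rabs a <= c * b -> Rabs (a / b) <= c.
Proof.
  intros Hb H. unfold Rdiv. rewrite Rabs_mult, Rabs_inv, (Rabs_right b) by lra.
  apply Rmult_le_reg_r with b; [lra|]. rewrite Rmult_assoc, Rinv_l by lra. lra.
Qed.

Lemma shift_bound M y xi w : 1 <= w -> 3 * w <= M -> Rabs y <= w -> 0 <= xi <= 1 ->
  Rabs (Phi M (y + xi) - Phi M y) <= 3 * w / M.
Proof.
  intros Hw HM Hy Hxi. apply Rabs_le_between in Hy.
  set (P := M + y). assert (HP : 2 * M / 3 <= P) by (unfold P; lra).
  assert (HP0 : 0 < P) by lra.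
  set (s := xi / P).
  assert (Hs0 : 0 <= s) by (apply Rdiv_le_0_compat; lra).
  assert (Hs1 : s <= 1 / P) by (unfold s; unfold Rdiv; apply Rmult_le_compat_r; [left; apply Rinv_0_lt_compat|]; lra).
  assert (E : Phi M (y + xi) - Phi M y = M * ln (1 + s) - xi).
  { unfold Phi. replace (M + (y + xi)) with (P * (1 + s)) by (unfold s, P; field; lra).
    rewrite ln_mult by lra. unfold s, P.
    replace ((M + y) * (1 + xi / (M + y))) with (M + y + xi) by (field; lra). ring. }
  rewrite E. pose proof (ln_ge s Hs0). pose proof (ln_le_id s ltac:(lra)).
  assert (Ems : M * s - xi = - y * xi / P) by (unfold s, P; field; lra).
  assert (B1 : Rabs (- y * xi / P) <= 3/2 * w / M).
  { apply abs_div_le; [lra|]. rewrite Rabs_mult, Rabs_Ropp, (Rabs_right xi) by lra.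
    assert (Rabs y <= w) by (apply Rabs_le; lra).
    assert (Rabs y * xi <= w) by (pose proof (Rabs_pos y); nra).
    apply Rle_trans with w; [lra|].
    replace (3 / 2 * w / M * P) with (w * (3 / 2 * P / M)) by (field; lra).
    assert (1 <= 3 / 2 * P / M).
    { apply Rmult_le_reg_r with M; [lra|]. unfold Rdiv. rewrite Rmult_assoc, Rinv_l by lra. lra. }
    nra. }
  apply Rabs_le_between in B1.
  assert (B2 : M * (s ^ 2 / 2) <= 9 / 8 * w / M).
  { assert (s ^ 2 <= 1 / P ^ 2).
    { replace (1 / P ^ 2) with ((1/P)^2) by (field; lra). apply pow_incr; lra. }
    assert (1 / P ^ 2 <= 9 / 4 / M ^ 2).
    { apply Rmult_le_reg_r with (P ^ 2 * M ^ 2); [apply Rmult_lt_0_compat; apply pow_lt; lra|].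
      replace (1 / P ^ 2 * (P ^ 2 * M ^ 2)) with (M^2) by (field; lra).
      replace (9 / 4 / M ^ 2 * (P ^ 2 * M ^ 2)) with (9/4 * P^2) by (field; lra). nra. }
    apply Rle_trans with (M * (9 / 4 / M ^ 2 / 2)).
    - apply Rmult_le_compat_l; lra.
    - replace (M * (9 / 4 / M ^ 2 / 2)) with (9/8 / M) by (field; lra).
      unfold Rdiv. apply Rmult_le_compat_r.
      left; apply Rinv_0_lt_compat; lra. lra. }
  assert (w / M > 0) by (apply Rdiv_lt_0_compat; lra).
  apply Rabs_le. split.
  - assert (M * ln (1 + s) >= M * (s - s ^ 2 / 2)) by (apply Rle_ge, Rmult_le_compat_l; lra).
    assert (3 * w / M = 3 * (w / M)) by (field; lra).
    assert (3 / 2 * w / M = 3/2 * (w / M)) by (field; lra).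
    assert (9 / 8 * w / M = 9/8 * (w / M)) by (field; lra). nra.
  - assert (M * ln (1 + s) <= M * s) by (apply Rmult_le_compat_l; lra).
    assert (3 * w / M = 3 * (w / M)) by (field; lra).
    assert (3 / 2 * w / M = 3/2 * (w / M)) by (field; lra). nra.
Qed.

Lemma G_bound M u w : 0 <= u <= w -> 0 < w -> 2 * w <= M ->
  Rabs (Phi M (- u) - Phi M w - (w ^ 2 - u ^ 2) / (2 * M)) <= 4 * w ^ 3 / M ^ 2.
Proof.
  intros Hu Hw HM. assert (HM0 : 0 < M) by lra.
  set (a := u / M). set (c := w / M).
  assert (Ha : 0 <= a <= 1/2).
  { unfold a; split. apply Rdiv_le_0_compat; lra.
    apply Rmult_le_reg_r with M; [lra|]. unfold Rdiv. rewrite Rmult_assoc, Rinv_l by lra. lra. }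
  assert (Hc : 0 <= c <= 1/2).
  { unfold c; split. apply Rdiv_le_0_compat; lra.
    apply Rmult_le_reg_r with M; [lra|]. unfold Rdiv. rewrite Rmult_assoc, Rinv_l by lra. lra. }
  pose proof (ln_taylor (- a) ltac:(lra)) as T1.
  pose proof (ln_taylor c ltac:(lra)) as T2.
  set (e1 := ln (1 + - a) - - a + (- a) ^ 2 / 2) in *.
  set (e2 := ln (1 + c) - c + c ^ 2 / 2) in *.
  assert (E : Phi M (- u) - Phi M w - (w ^ 2 - u ^ 2) / (2 * M) = M * (e1 - e2)).
  { unfold Phi, e1, e2.
    replace (M + - u) with (M * (1 + - a)) by (unfold a; field; lra).
    replace (M + w) with (M * (1 + c)) by (unfold c; field; lra).
    rewrite !ln_mult by lra. unfold a, c. field. lra. }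
  rewrite E, Rabs_mult, (Rabs_right M) by lra.
  rewrite Rabs_Ropp, (Rabs_right a) in T1 by lra. rewrite (Rabs_right c) in T2 by lra.
  assert (Rabs (e1 - e2) <= 2 * a ^ 3 + 2 * c ^ 3).
  { eapply Rle_trans. apply Rabs_triang. rewrite Rabs_Ropp. lra. }
  assert (a ^ 3 <= c ^ 3) by (apply pow_incr; split; [lra|]; unfold a, c;
    unfold Rdiv; apply Rmult_le_compat_r; [left; apply Rinv_0_lt_compat|]; lra).
  apply Rle_trans with (M * (4 * c ^ 3)).
  - apply Rmult_le_compat_l; lra.
  - right. unfold c. field. lra.
Qed.

Lemma b_bound N u w : Phi N w = Phi N (- u) -> 0 <= u <= w -> 0 < w -> 2 * w <= N ->
  0 <= w ^ 2 - u ^ 2 <= 8 * w ^ 3 / N.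
Proof.
  intros E Hu Hw HN. pose proof (G_bound N u w Hu Hw HN) as G.
  rewrite E in G. replace (Phi N (- u) - Phi N (- u) - (w ^ 2 - u ^ 2) / (2 * N))
    with (- ((w ^ 2 - u ^ 2) / (2 * N))) in G by ring.
  rewrite Rabs_Ropp in G. apply Rabs_le_between in G.
  split. nra.
  replace (8 * w ^ 3 / N) with (4 * w ^ 3 / N ^ 2 * (2 * N)) by (field; lra).
  replace (w ^ 2 - u ^ 2) with ((w ^ 2 - u ^ 2) / (2 * N) * (2 * N)) by (field; lra).
  apply Rmult_le_compat_r; lra.
Qed.

Lemma abs4 a b c d : Rabs (a + b - c + d) <= Rabs a + Rabs b + Rabs c + Rabs d.
Proof. unfold Rabs; repeat destruct Rcase_abs; lra. Qed.

Lemma Dj_real J y : 4 <= J -> Rabs y <= J / 2 ->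
  Rabs (1 + ln J + (J - 1) * ln (J - 1 + y) - J * ln (J + y) - (1 / (2 * J) - y ^ 2 / (2 * J ^ 2)))
  <= 4 * Rabs y ^ 3 / J ^ 3 + 2 * y ^ 2 / J ^ 3 + 18 / J ^ 2.
Proof.
  intros HJ Hy. set (Y := Rabs y). assert (HY0 : 0 <= Y) by apply Rabs_pos.
  assert (Hyb := Hy). apply Rabs_le_between in Hyb.
  pose (p := J + y). assert (Hp : J / 2 <= p) by (unfold p; lra).
  set (s := y / J). set (q := - (1 / p)).
  assert (Hs : -1/2 <= s <= 1/2).
  { unfold s. split; apply Rmult_le_reg_r with J; try lra; replace (y / J * J) with y by (field; lra); lra. }
  assert (Hq : -1/2 <= q <= 0).
  { unfold q. assert (0 < 1 / p) by (apply Rdiv_lt_0_compat; lra).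
    assert (1 / p <= 1 / 2).
    { apply Rmult_le_reg_r with p; [lra|]. replace (1 / p * p) with 1 by (field; lra). lra. }
    lra. }
  pose proof (ln_taylor s Hs) as T4. pose proof (ln_taylor q ltac:(lra)) as T3.
  set (e4 := ln (1 + s) - s + s ^ 2 / 2) in *.
  set (e3 := ln (1 + q) - q + q ^ 2 / 2) in *.
  assert (L1 : ln (J + y) = ln J + ln (1 + s)).
  { rewrite <- ln_mult by lra. f_equal. unfold s. field. lra. }
  assert (L2 : ln (J - 1 + y) = ln (J + y) + ln (1 + q)).
  { rewrite <- ln_mult by (unfold p in *; lra). f_equal. unfold q, p. field. lra. }
  assert (E : 1 + ln J + (J - 1) * ln (J - 1 + y) - J * ln (J + y) - (1 / (2 * J) - y ^ 2 / (2 * J ^ 2))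
     = y ^ 3 / (J ^ 2 * p) + (J - y ^ 2) / (2 * J * p ^ 2) - e4 + (J - 1) * e3).
  { rewrite L2, L1. unfold e4, e3, s, q, p. field. lra. }
  rewrite E.
  assert (A1 : Rabs (y ^ 3 / (J ^ 2 * p)) <= 2 * Y ^ 3 / J ^ 3).
  { apply abs_div_le. apply Rmult_lt_0_compat; [apply pow_lt|]; lra.
    rewrite <- RPow_abs. fold Y.
    replace (2 * Y ^ 3 / J ^ 3 * (J ^ 2 * p)) with (Y ^ 3 * (2 * p / J)) by (field; lra).
    assert (1 <= 2 * p / J).
    { apply Rmult_le_reg_r with J; [lra|]. unfold Rdiv. rewrite Rmult_assoc, Rinv_l by lra. lra. }
    assert (0 <= Y ^ 3) by (apply pow_le; lra). nra. }
  assert (A2 : Rabs ((J - y ^ 2) / (2 * J * p ^ 2)) <= 2 / J ^ 2 + 2 * y ^ 2 / J ^ 3).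
  { apply abs_div_le. apply Rmult_lt_0_compat; [|apply pow_lt]; lra.
    assert (0 <= y ^ 2) by nra.
    apply Rle_trans with (J + y ^ 2).
    { apply Rabs_le. lra. }
    replace ((2 / J ^ 2 + 2 * y ^ 2 / J ^ 3) * (2 * J * p ^ 2)) with ((J + y ^ 2) * (4 * p ^ 2 / J ^ 2)) by (field; lra).
    assert (1 <= 4 * p ^ 2 / J ^ 2).
    { apply Rmult_le_reg_r with (J ^ 2); [apply pow_lt; lra|]. unfold Rdiv. rewrite Rmult_assoc, Rinv_l by (apply pow_nonzero; lra). nra. }
    nra. }
  assert (A3 : Rabs e4 <= 2 * Y ^ 3 / J ^ 3).
  { eapply Rle_trans; [exact T4|]. right. unfold s. unfold Rdiv. rewrite Rabs_mult, Rabs_inv, (Rabs_right J) by lra.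
    fold Y. field. lra. }
  assert (A4 : Rabs ((J - 1) * e3) <= 16 / J ^ 2).
  { rewrite Rabs_mult, (Rabs_right (J - 1)) by lra.
    assert (Rabs q <= 2 / J).
    { unfold q. rewrite Rabs_Ropp. apply abs_div_le; [lra|]. rewrite Rabs_R1.
      replace (2 / J * p) with (2 * p / J) by (field; lra).
      apply Rmult_le_reg_r with J; [lra|]. unfold Rdiv. rewrite Rmult_assoc, Rinv_l by lra. lra. }
    assert (Rabs q ^ 3 <= (2 / J) ^ 3) by (apply pow_incr; split; [apply Rabs_pos|lra]).
    assert (Rabs e3 <= 16 / J ^ 3).
    { eapply Rle_trans; [exact T3|]. replace (16 / J ^ 3) with (2 * (2 / J) ^ 3) by (field; lra). lra. }
    apply Rle_trans with (J * (16 / J ^ 3)).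
    - apply Rmult_le_compat; try lra. apply Rabs_pos.
    - right. field. lra. }
  eapply Rle_trans. apply abs4.
  assert (4 * Y ^ 3 / J ^ 3 = 2 * Y ^ 3 / J ^ 3 + 2 * Y ^ 3 / J ^ 3) by (field; lra).
  assert (18 / J ^ 2 = 2 / J ^ 2 + 16 / J ^ 2) by (field; lra).
  lra.
Qed.

Lemma Dj_w J y w N : 1 <= w -> 2 * (w + 1) <= J -> J <= w ^ 2 / 4 -> J <= N ->
  Rabs y <= w + 1 -> Rabs (y ^ 2 - w ^ 2) <= 3 * w + 8 * w ^ 3 / N ->
  Rabs (1 + ln J + (J - 1) * ln (J - 1 + y) - J * ln (J + y) - / (2 * J) * (1 - w ^ 2 / J))
  <= 50 * (w ^ 3 / J ^ 3).
Proof.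
  intros Hw HJ HJw HJN Hy Hyw.
  assert (HJ0 : 0 < J) by lra.
  pose proof (Dj_real J y ltac:(lra) ltac:(lra)) as D.
  set (Y := Rabs y) in *. assert (HY0 : 0 <= Y) by apply Rabs_pos.
  assert (Ey : y ^ 2 = Y ^ 2) by (unfold Y; rewrite pow2_abs; reflexivity).
  assert (E : 1 + ln J + (J - 1) * ln (J - 1 + y) - J * ln (J + y) - / (2 * J) * (1 - w ^ 2 / J)
    = (1 + ln J + (J - 1) * ln (J - 1 + y) - J * ln (J + y) - (1 / (2 * J) - y ^ 2 / (2 * J ^ 2)))
      + (w ^ 2 - y ^ 2) / (2 * J ^ 2)) by (field; lra).
  rewrite E. eapply Rle_trans. apply Rabs_triang.
  assert (HJ3 : 0 < J ^ 3) by (apply pow_lt; lra).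
  assert (B1 : 4 * Y ^ 3 / J ^ 3 <= 32 * (w ^ 3 / J ^ 3)).
  { unfold Rdiv. rewrite <- Rmult_assoc. apply Rmult_le_compat_r. left; apply Rinv_0_lt_compat; lra.
    assert (Y ^ 3 <= (2 * w) ^ 3) by (apply pow_incr; lra). simpl in *. lra. }
  assert (B2 : 2 * y ^ 2 / J ^ 3 <= 8 * (w ^ 3 / J ^ 3)).
  { unfold Rdiv. rewrite <- Rmult_assoc. apply Rmult_le_compat_r. left; apply Rinv_0_lt_compat; lra.
    rewrite Ey. assert (Y ^ 2 <= (2 * w) ^ 2) by (apply pow_incr; lra).
    assert (w ^ 2 <= w ^ 3) by (simpl; nra). simpl in *. lra. }
  assert (B3 : 1 / J ^ 2 <= 1 / 4 * (w ^ 3 / J ^ 3)).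
  { replace (1 / J ^ 2) with (J / J ^ 3) by (field; lra).
    replace (1 / 4 * (w ^ 3 / J ^ 3)) with ((w ^ 3 / 4) / J ^ 3) by (field; lra).
    unfold Rdiv. apply Rmult_le_compat_r. left; apply Rinv_0_lt_compat; lra.
    assert (w ^ 2 <= w ^ 3) by (simpl; nra). lra. }
  assert (B4 : Rabs ((w ^ 2 - y ^ 2) / (2 * J ^ 2)) <= 5 * (w ^ 3 / J ^ 3)).
  { apply abs_div_le. apply Rmult_lt_0_compat; [lra| apply pow_lt; lra].
    rewrite <- Rabs_Ropp. replace (- (w ^ 2 - y ^ 2)) with (y ^ 2 - w ^ 2) by ring.
    eapply Rle_trans; [exact Hyw|].
    replace (5 * (w ^ 3 / J ^ 3) * (2 * J ^ 2)) with (10 * (w ^ 3 / J)) by (field; lra).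
    assert (8 * w ^ 3 / N <= 8 * (w ^ 3 / J)).
    { unfold Rdiv. rewrite Rmult_assoc. apply Rmult_le_compat_l; [lra|].
      apply Rmult_le_compat_l. apply pow_le; lra. apply Rinv_le_contravar; lra. }
    assert (3 * w <= 2 * (w ^ 3 / J)).
    { apply Rmult_le_reg_r with J; [lra|].
      replace (2 * (w ^ 3 / J) * J) with (2 * w ^ 3) by (field; lra).
      assert (w * J <= w * (w ^ 2 / 4)) by (apply Rmult_le_compat_l; lra).
      replace (w * (w ^ 2 / 4)) with (w ^ 3 / 4) in H0 by (simpl; field).
      assert (0 <= w ^ 3) by (apply pow_le; lra). nra. }
    lra. }
  assert (18 / J ^ 2 = 18 * (1 / J ^ 2)) by (field; lra).
  assert (0 <= w ^ 3 / J ^ 3) by (apply Rdiv_le_0_compat; [apply pow_le|]; lra).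
  revert D B1 B2 B3 B4 H H0. generalize (w ^ 3 / J ^ 3) (1 / J ^ 2) (18 / J ^ 2) (2 * y ^ 2 / J ^ 3) (4 * Y ^ 3 / J ^ 3).
  intros. lra.
Qed.

Lemma sum_f_single n u : sum_f n n u = u n.
Proof. unfold sum_f. rewrite Nat.sub_diag. simpl. reflexivity. Qed.

Lemma sum_f_step a d u : sum_f a (a + S d) u = sum_f a (a + d) u + u (a + S d)%nat.
Proof. replace (a + S d)%nat with (S (a + d)) by lia. apply sum_f_n_Sm. lia. Qed.

Lemma sum_f_lin a d f g t :
  sum_f a (a + d) (fun j => f j + t * g j) = sum_f a (a + d) f + t * sum_f a (a + d) g.
Proof.
  induction d.
  - rewrite Nat.add_0_r, !sum_f_single. reflexivity.
  - rewrite !sum_f_step, IHd. ring.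
Qed.

Lemma sum_f_first a d u : sum_f a (a + S d) u = u a + sum_f (S a) (S a + d) u.
Proof.
  induction d.
  - rewrite Nat.add_0_r, sum_f_single. replace (a + 1)%nat with (S a) by lia.
    rewrite sum_f_n_Sm by lia. rewrite sum_f_single. reflexivity.
  - rewrite sum_f_step, IHd. replace (S a + S d)%nat with (S a + d + 1)%nat by lia.
    replace (a + S (S d))%nat with (S a + d + 1)%nat by lia.
    replace (S a + d + 1)%nat with (S a + S d)%nat by lia. rewrite sum_f_step. ring.
Qed.

Lemma sum_f_nonneg a d u : (forall j, (a <= j <= a + d)%nat -> 0 <= u j) -> 0 <= sum_f a (a + d) u.
Proof.
  induction d; intros H.
  - rewrite Nat.add_0_r, sum_f_single. apply H. lia.
  - rewrite sum_f_step. assert (0 <= u (a + S d)%nat) by (apply H; lia).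
    assert (0 <= sum_f a (a + d) u) by (apply IHd; intros; apply H; lia). lra.
Qed.

Lemma sum_f_mono a d e u : (forall j, (a <= j <= a + d + e)%nat -> 0 <= u j) ->
  sum_f a (a + d) u <= sum_f a (a + d + e) u.
Proof.
  induction e; intros H.
  - rewrite Nat.add_0_r. lra.
  - replace (a + d + S e)%nat with (a + S (d + e))%nat by lia. rewrite sum_f_step.
    replace (a + (d + e))%nat with (a + d + e)%nat by lia.
    assert (0 <= u (a + S (d + e))%nat) by (apply H; lia).
    assert (sum_f a (a + d) u <= sum_f a (a + d + e) u) by (apply IHe; intros; apply H; lia). lra.
Qed.

Lemma sum_f_lower a d u L : (forall j, (a <= j <= a + d)%nat -> L <= u j) ->
  INR (S d) * L <= sum_f a (a + d) u.
Proof.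
  induction d; intros H.
  - rewrite Nat.add_0_r, sum_f_single. simpl. rewrite Rmult_1_l. apply H. lia.
  - rewrite sum_f_step. rewrite S_INR, Rmult_plus_distr_r, Rmult_1_l.
    assert (L <= u (a + S d)%nat) by (apply H; lia).
    assert (INR (S d) * L <= sum_f a (a + d) u) by (apply IHd; intros; apply H; lia). lra.
Qed.

Lemma tele_abs (F tgt h : nat -> R) a d :
  (forall j, (a < j <= a + S d)%nat -> Rabs (F (j - 1)%nat - F j - tgt j) <= h j) ->
  Rabs (F a - F (S a + d)%nat - sum_f (S a) (S a + d) tgt) <= sum_f (S a) (S a + d) h.
Proof.
  induction d; intros H.
  - rewrite Nat.add_0_r, !sum_f_single. replace a with (S a - 1)%nat at 1 by lia. apply H; lia.
  - rewrite !sum_f_step.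
    assert (IH : Rabs (F a - F (S a + d)%nat - sum_f (S a) (S a + d) tgt) <= sum_f (S a) (S a + d) h)
      by (apply IHd; intros; apply H; lia).
    assert (Hj : Rabs (F (S a + S d - 1)%nat - F (S a + S d)%nat - tgt (S a + S d)%nat) <= h (S a + S d)%nat)
      by (apply H; lia).
    replace (S a + S d - 1)%nat with (S a + d)%nat in Hj by lia.
    eapply Rle_trans; [|apply Rplus_le_compat; [exact IH| exact Hj]].
    eapply Rle_trans; [|apply Rabs_triang]. right. f_equal. ring.
Qed.

Lemma Psi_step j y : (1 <= j)%nat -> 0 < INR j - 1 + y ->
  Psi (j - 1) y - Psi j y = 1 + ln (INR j) + (INR j - 1) * ln (INR j - 1 + y) - INR j * ln (INR j + y).
Proof.
  intros Hj Hy. destruct j as [|j']; [lia|].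
  replace (S j' - 1)%nat with j' by lia.
  unfold Psi. rewrite S_INR in *.
  replace (fact (S j')) with (S j' * fact j')%nat by reflexivity.
  rewrite mult_INR, S_INR, ln_mult.
  2:{ pose proof (pos_INR j'); lra. }
  2:{ apply fact_pos. }
  replace (INR j' + 1 - 1) with (INR j') by ring. ring.
Qed.

Lemma Psi_Phi M y1 y2 : Psi M y1 - Psi M y2 = Phi (INR M) y1 - Phi (INR M) y2.
Proof. unfold Psi, Phi. ring. Qed.

Definition tgt (w : R) (j : nat) := / (2 * INR j) * (1 - w ^ 2 / INR j).
Definition cub (w : R) (j : nat) := w ^ 3 / INR j ^ 3.

Lemma INR_ge n m : (m <= n)%nat -> INR m <= INR n.
Proof. intros; apply le_INR; lia. Qed.

Lemma sum_f_scal a c t g : (a <= c)%nat ->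
  sum_f a c (fun j => t * g j) = t * sum_f a c g.
Proof.
  intros H. replace c with (a + (c - a))%nat by lia. generalize (c - a)%nat. intros d.
  induction d.
  - rewrite Nat.add_0_r, !sum_f_single. reflexivity.
  - rewrite !sum_f_step, IHd. ring.
Qed.

Lemma tgt_abs w a : 0 < INR a -> Rabs (tgt w a) <= / (2 * INR a) + w ^ 2 / (2 * INR a ^ 2).
Proof.
  intros HA. unfold tgt. rewrite Rabs_mult, Rabs_right.
  2:{ apply Rle_ge, Rlt_le, Rinv_0_lt_compat; lra. }
  assert (0 <= w ^ 2 / INR a) by (apply Rdiv_le_0_compat; [nra|lra]).
  assert (Rabs (1 - w ^ 2 / INR a) <= 1 + w ^ 2 / INR a) by (apply Rabs_le; lra).
  apply Rle_trans with (/ (2 * INR a) * (1 + w ^ 2 / INR a)).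
  - apply Rmult_le_compat_l; [left; apply Rinv_0_lt_compat; lra| lra].
  - right. field. lra.
Qed.

Lemma tgt_extra n a w : 3 * w <= INR a -> (a <= n)%nat -> 1 <= w -> w <= INR n / 10 ->
  4 * INR n <= w ^ 2 -> Rabs (tgt w a) <= 8 * sum_f a n (cub w) + 2 * (w / INR n).
Proof.
  intros HA Han Hw Hwn Hw2. set (A := INR a) in *.
  assert (HA0 : 0 < A) by lra.
  assert (HAn : A <= INR n) by (apply INR_ge; lia).
  pose proof (tgt_abs w a HA0) as T. fold A in T.
  assert (Hcub : forall j, (a <= j)%nat -> 0 <= cub w j).
  { intros j Hj. unfold cub. assert (0 < INR j) by (pose proof (INR_ge j a Hj); unfold A in HA0; lra).
    apply Rdiv_le_0_compat; [apply pow_le; lra| apply pow_lt; lra]. }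
  assert (HQ : 0 <= sum_f a n (cub w)).
  { replace n with (a + (n - a))%nat by lia. apply sum_f_nonneg. intros; apply Hcub; lia. }
  destruct (Compare_dec.le_lt_dec n (2 * a)) as [Hc|Hc].
  - assert (H2A : INR n <= 2 * A).
    { unfold A. replace 2 with (INR 2) by (simpl; lra). rewrite <- mult_INR. apply INR_ge. lia. }
    assert (E1 : / (2 * A) <= w / INR n).
    { apply Rle_trans with (/ INR n). apply Rinv_le_contravar; lra.
      unfold Rdiv. rewrite <- (Rmult_1_l (/ INR n)) at 1. apply Rmult_le_compat_r.
      left; apply Rinv_0_lt_compat; lra. lra. }
    assert (E2 : w ^ 2 / (2 * A ^ 2) <= w / INR n).
    { apply Rmult_le_reg_r with (2 * A ^ 2 * INR n). apply Rmult_lt_0_compat; [|lra]. nra.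
      replace (w ^ 2 / (2 * A ^ 2) * (2 * A ^ 2 * INR n)) with (w ^ 2 * INR n) by (field; lra).
      replace (w / INR n * (2 * A ^ 2 * INR n)) with (w * (2 * A ^ 2)) by (field; lra).
      assert (INR n ^ 2 <= 4 * A ^ 2) by nra.
      assert (w * INR n <= INR n ^ 2 / 10) by nra.
      nra. }
    lra.
  - set (L := w ^ 3 / (8 * A ^ 3)).
    assert (Hlow : INR (S a) * L <= sum_f a (a + a) (cub w)).
    { apply sum_f_lower. intros j Hj. unfold cub, L.
      assert (A <= INR j) by (apply INR_ge; lia).
      assert (INR j <= 2 * A) by (unfold A; replace 2 with (INR 2) by (simpl; lra); rewrite <- mult_INR; apply INR_ge; lia).
      unfold Rdiv. apply Rmult_le_compat_l; [apply pow_le; lra|].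
      apply Rinv_le_contravar. apply pow_lt; lra.
      replace (8 * A ^ 3) with ((2 * A) ^ 3) by ring. apply pow_incr; lra. }
    assert (Hmono : sum_f a (a + a) (cub w) <= sum_f a n (cub w)).
    { pose proof (sum_f_mono a a (n - (a + a)) (cub w) ltac:(intros; apply Hcub; lia)) as M.
      replace (a + a + (n - (a + a)))%nat with n in M by lia. exact M. }
    assert (HSa : A <= INR (S a)) by (rewrite S_INR; unfold A; lra).
    assert (HL : 0 <= L) by (unfold L; apply Rdiv_le_0_compat; [apply pow_le; lra| apply Rmult_lt_0_compat; [lra| apply pow_lt; lra]]).
    assert (E3 : w ^ 3 / A ^ 2 <= 8 * (A * L)).
    { right. unfold L. field. lra. }
    assert (A * L <= INR (S a) * L) by (apply Rmult_le_compat_r; lra).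
    assert (E4 : / (2 * A) + w ^ 2 / (2 * A ^ 2) <= w ^ 3 / A ^ 2).
    { assert (A <= w ^ 3).
      { assert (w ^ 2 <= w ^ 3) by (simpl; nra). lra. }
      assert (w ^ 2 <= w ^ 3) by (simpl; nra).
      apply Rmult_le_reg_r with (2 * A ^ 2). nra.
      replace ((/ (2 * A) + w ^ 2 / (2 * A ^ 2)) * (2 * A ^ 2)) with (A + w ^ 2) by (field; lra).
      replace (w ^ 3 / A ^ 2 * (2 * A ^ 2)) with (2 * w ^ 3) by (field; lra). lra. }
    assert (0 <= w / INR n) by (apply Rdiv_le_0_compat; lra).
    lra.
Qed.

Lemma part2_bound n k w xi y0 :
  (100 <= n)%nat -> 1 <= w -> w <= INR n / 10 -> 4 * INR n <= w ^ 2 ->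
  (1 <= k)%nat -> INR k <= INR n - 3 * w -> Rabs y0 <= w -> 0 <= xi <= 1 ->
  Rabs ((y0 + xi) ^ 2 - w ^ 2) <= 3 * w + 8 * w ^ 3 / INR n ->
  Rabs (Psi (n - k) (y0 + xi) - Psi n y0 - sum_f (n - k) n (tgt w))
    <= 61 * (sum_f (n - k) n (cub w) + w / INR n).
Proof.
  intros Hn Hw Hwn Hw2 Hk Hkn Hy0 Hxi Hyw.
  set (y := y0 + xi) in *.
  assert (HN : 100 <= INR n) by (replace 100 with (INR 100) by (simpl; lra); apply INR_ge; lia).
  assert (Hkn' : (k <= n)%nat).
  { apply INR_le. lra. }
  set (a := (n - k)%nat).
  assert (HA : 3 * w <= INR a) by (unfold a; rewrite minus_INR by lia; lra).
  assert (Hna : n = (S a + (k - 1))%nat) by (unfold a; lia).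
  assert (Hna' : n = (a + S (k - 1))%nat) by (unfold a; lia).
  assert (Hy0b := Hy0). apply Rabs_le_between in Hy0b.
  assert (Hy : Rabs y <= w + 1) by (apply Rabs_le; unfold y; lra).
  assert (Hyb : - w <= y <= w + 1) by (unfold y; lra).
  assert (T : Rabs (Psi a y - Psi n y - sum_f (S a) n (tgt w)) <= sum_f (S a) n (fun j => 50 * cub w j)).
  { rewrite Hna at 1 2 3. apply (tele_abs (fun j => Psi j y) (tgt w) (fun j => 50 * cub w j) a (k - 1)).
    intros j Hj. rewrite <- Hna' in Hj.
    assert (HJ1 : INR a + 1 <= INR j) by (rewrite <- S_INR; apply INR_ge; lia).
    assert (HJn : INR j <= INR n) by (apply INR_ge; lia).
    rewrite Psi_step by (lia || lra).
    unfold tgt, cub. apply (Dj_w (INR j) y w (INR n)); lra. }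
  assert (S1 : Rabs (Psi n y - Psi n y0) <= 3 * w / INR n).
  { rewrite Psi_Phi. unfold y. apply shift_bound; lra. }
  assert (Fs : forall u, sum_f a n u = u a + sum_f (S a) n u).
  { intros u. rewrite Hna' at 1. rewrite sum_f_first. rewrite <- Hna. reflexivity. }
  assert (Hcub : forall j, (a <= j)%nat -> 0 <= cub w j).
  { intros j Hj. unfold cub. assert (0 < INR j) by (pose proof (INR_ge j a Hj); lra).
    apply Rdiv_le_0_compat; [apply pow_le; lra| apply pow_lt; lra]. }
  rewrite (Fs (tgt w)), (Fs (cub w)).
  rewrite sum_f_scal in T by lia.
  pose proof (tgt_extra n a w HA ltac:(unfold a; lia) Hw Hwn Hw2) as X.
  rewrite (Fs (cub w)) in X.
  assert (Hca : 0 <= cub w a) by (apply Hcub; lia).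
  assert (HQ' : 0 <= sum_f (S a) n (cub w)).
  { rewrite Hna. apply sum_f_nonneg. intros; apply Hcub; lia. }
  assert (Hwn0 : 0 <= w / INR n) by (apply Rdiv_le_0_compat; lra).
  assert (E3 : 3 * w / INR n = 3 * (w / INR n)) by (field; lra).
  assert (Eq : Psi a y - Psi n y0 - (tgt w a + sum_f (S a) n (tgt w))
    = (Psi a y - Psi n y - sum_f (S a) n (tgt w)) + (Psi n y - Psi n y0) - tgt w a) by ring.
  rewrite Eq.
  assert (Tr : forall p q r, Rabs (p + q - r) <= Rabs p + Rabs q + Rabs r)
    by (intros; unfold Rabs; repeat destruct Rcase_abs; lra).
  eapply Rle_trans. apply Tr. lra.
Qed.

Lemma sum_f_lin2 a c f g t : (a <= c)%nat ->
  sum_f a c (fun j => f j + t * g j) = sum_f a c f + t * sum_f a c g.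
Proof.
  intros H. replace c with (a + (c - a))%nat by lia. apply sum_f_lin.
Qed.

Lemma part2_exists n k w xi y0 C :
  (100 <= n)%nat -> 1 <= w -> w <= INR n / 10 -> 4 * INR n <= w ^ 2 ->
  (1 <= k)%nat -> INR k <= INR n - 3 * w -> Rabs y0 <= w -> 0 <= xi <= 1 ->
  Rabs ((y0 + xi) ^ 2 - w ^ 2) <= 3 * w + 8 * w ^ 3 / INR n -> 61 <= C ->
  exists (th : nat -> R) (t : R),
    (forall j : nat, (n - k <= j <= n)%nat -> Rabs (th j) <= 1) /\
    Rabs t <= 1 /\
    exp (Psi (n - k) (y0 + xi)) =
      exp (Psi n y0) *
      exp (sum_range (n - k) n
             (fun j => / (2 * INR j) * (1 - w ^ 2 / INR j)
                       + th j * C * (w ^ 3 / INR j ^ 3))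
           + t * C * (w / INR n)).
Proof.
  intros Hn Hw Hwn Hw2 Hk Hkn Hy0 Hxi Hyw HC.
  pose proof (part2_bound n k w xi y0 Hn Hw Hwn Hw2 Hk Hkn Hy0 Hxi Hyw) as PB.
  assert (HN : 100 <= INR n) by (replace 100 with (INR 100) by (simpl; lra); apply INR_ge; lia).
  assert (Hkn' : (k <= n)%nat) by (apply INR_le; lra).
  set (Q1 := sum_f (n - k) n (cub w)) in *.
  assert (HQ1 : 0 <= Q1).
  { unfold Q1. replace n with (n - k + k)%nat at 2 by lia. apply sum_f_nonneg.
    intros j Hj. unfold cub. assert (3 * w <= INR (n - k)) by (rewrite minus_INR by lia; lra).
    assert (INR (n - k) <= INR j) by (apply INR_ge; lia).
    apply Rdiv_le_0_compat; [apply pow_le; lra| apply pow_lt; lra]. }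
  set (Q := Q1 + w / INR n) in *.
  assert (HQ : 0 < Q) by (unfold Q; assert (0 < w / INR n) by (apply Rdiv_lt_0_compat; lra); lra).
  set (num := Psi (n - k) (y0 + xi) - Psi n y0 - sum_f (n - k) n (tgt w)) in *.
  set (th := num / (C * Q)).
  assert (Hth : Rabs th <= 1).
  { unfold th. apply abs_div_le. nra. nra. }
  exists (fun _ => th), th. split; [intros; exact Hth|]. split; [exact Hth|].
  rewrite <- exp_plus. f_equal. unfold sum_range.
  assert (Es : sum_f (n - k) n (fun j => / (2 * INR j) * (1 - w ^ 2 / INR j) + th * C * (w ^ 3 / INR j ^ 3))
     = sum_f (n - k) n (tgt w) + th * C * Q1) by (apply (sum_f_lin2 (n - k) n (tgt w) (cub w) (th * C)); lia).
  rewrite Es. unfold num in th.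
  replace (Psi (n - k) (y0 + xi)) with (Psi n y0 + sum_f (n - k) n (tgt w) + th * (C * Q)).
  2:{ unfold th. field. nra. }
  unfold Q. ring.
Qed.

Lemma exp_m1 d : Rabs (exp d - 1) <= Rabs d * exp (Rabs d).
Proof.
  pose proof (exp_ineq1_le d). pose proof (exp_ineq1_le (- d)).
  pose proof (exp_pos d).
  assert (exp d * exp (- d) = 1) by (rewrite <- exp_plus; replace (d + - d) with 0 by ring; apply exp_0).
  assert (exp d - 1 <= d * exp d) by nra.
  destruct (Rle_dec 0 d).
  - rewrite !(Rabs_right d) by lra. rewrite Rabs_right by lra. lra.
  - rewrite !(Rabs_left d) by lra. rewrite Rabs_left1 by nra.
    assert (1 <= exp (- d)) by lra. assert (0 < - d) by lra. nra.
Qed.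

Lemma exp_mono a b : a <= b -> exp a <= exp b.
Proof. intros [H|H]. left; apply exp_increasing; auto. subst; lra. Qed.

Lemma fm_S_repr M y : 0 < INR M + y -> fm (S M) (1 - y) = exp (Psi M y).
Proof. apply fm_repr. Qed.

Definition C0 := 64 * exp 64.

Lemma part1_B n M w u xi : (100 <= n)%nat -> 1 <= w -> w <= INR n / 10 ->
  Phi (INR n) w = Phi (INR n) (- u) -> 0 <= u <= w -> 0 <= xi <= 1 ->
  w ^ 3 <= INR (S M) ^ 2 -> (S M <= n)%nat -> 4 * w + 1 <= INR (S M) ->
  Rabs (fm (S M) (1 - (- u + xi)) - fm (S M) (1 - (w + xi)))
    <= C0 * (w / INR (S M) + w ^ 3 / INR (S M) ^ 2) * fm (S M) (1 - w).
Proof.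
  intros Hn Hw Hwn Hb Hu Hxi Hh3 HhN Hh.
  rewrite S_INR in *. set (m := INR M) in *.
  assert (Hm : 4 * w <= m) by lra.
  assert (HN : INR (S M) <= INR n) by (apply INR_ge; lia). rewrite S_INR in HN. fold m in HN.
  rewrite !fm_S_repr by (fold m; lra).
  set (E := w / (m + 1) + w ^ 3 / (m + 1) ^ 2).
  assert (Hw1 : w / (m + 1) <= 1).
  { apply Rmult_le_reg_r with (m + 1); [lra|]. replace (w / (m + 1) * (m + 1)) with w by (field; lra). lra. }
  assert (Hw3 : w ^ 3 / (m + 1) ^ 2 <= 1).
  { apply Rmult_le_reg_r with ((m + 1) ^ 2); [apply pow_lt; lra|].
    replace (w ^ 3 / (m + 1) ^ 2 * (m + 1) ^ 2) with (w ^ 3) by (field; lra). lra. }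
  assert (Hwp : 0 <= w / (m + 1)) by (apply Rdiv_le_0_compat; lra).
  assert (Hw3p : 0 <= w ^ 3 / (m + 1) ^ 2) by (apply Rdiv_le_0_compat; [apply pow_le|apply pow_lt]; lra).
  assert (HE : 0 <= E <= 2) by (unfold E; lra).
  assert (R1 : w / m <= 2 * (w / (m + 1))).
  { apply Rmult_le_reg_r with (m * (m + 1)). nra.
    replace (w / m * (m * (m + 1))) with (w * (m + 1)) by (field; lra).
    replace (2 * (w / (m + 1)) * (m * (m + 1))) with (w * (2 * m)) by (field; lra). nra. }
  assert (R3 : w ^ 3 / m ^ 2 <= 4 * (w ^ 3 / (m + 1) ^ 2)).
  { apply Rmult_le_reg_r with (m ^ 2 * (m + 1) ^ 2). apply Rmult_lt_0_compat; apply pow_lt; lra.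
    replace (w ^ 3 / m ^ 2 * (m ^ 2 * (m + 1) ^ 2)) with (w ^ 3 * (m + 1) ^ 2) by (field; lra).
    replace (4 * (w ^ 3 / (m + 1) ^ 2) * (m ^ 2 * (m + 1) ^ 2)) with (w ^ 3 * (4 * m ^ 2)) by (field; lra).
    apply Rmult_le_compat_l. apply pow_le; lra. nra. }
  assert (Da : Rabs (Psi M (- u + xi) - Psi M w) <= 32 * E).
  { replace (Psi M (- u + xi) - Psi M w) with ((Psi M (- u + xi) - Psi M (- u)) + (Psi M (- u) - Psi M w)) by ring.
    rewrite !Psi_Phi. fold m.
    assert (S1 : Rabs (Phi m (- u + xi) - Phi m (- u)) <= 3 * w / m).
    { apply shift_bound; try lra. rewrite Rabs_Ropp, Rabs_right; lra. }
    pose proof (b_bound (INR n) u w Hb Hu ltac:(lra) ltac:(lra)) as BB.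
    pose proof (G_bound m u w Hu ltac:(lra) ltac:(lra)) as G.
    assert (G2 : (w ^ 2 - u ^ 2) / (2 * m) <= 4 * (w ^ 3 / m ^ 2)).
    { apply Rmult_le_reg_r with (2 * m); [lra|].
      replace ((w ^ 2 - u ^ 2) / (2 * m) * (2 * m)) with (w ^ 2 - u ^ 2) by (field; lra).
      replace (4 * (w ^ 3 / m ^ 2) * (2 * m)) with (8 * w ^ 3 / m) by (field; lra).
      apply Rle_trans with (8 * w ^ 3 / INR n); [lra|].
      unfold Rdiv. apply Rmult_le_compat_l. assert (0 <= w ^ 3) by (apply pow_le; lra). lra.
      apply Rinv_le_contravar; lra. }
    assert (G3 : 0 <= (w ^ 2 - u ^ 2) / (2 * m)) by (apply Rdiv_le_0_compat; lra).
    assert (E4 : 4 * w ^ 3 / m ^ 2 = 4 * (w ^ 3 / m ^ 2)) by (field; lra).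
    assert (E5 : 3 * w / m = 3 * (w / m)) by (field; lra).
    apply Rabs_le_between in G.
    assert (Tr : forall p q, Rabs (p + q) <= Rabs p + Rabs q) by (intros; apply Rabs_triang).
    eapply Rle_trans. apply Tr.
    assert (Rabs (Phi m (- u) - Phi m w) <= 8 * (w ^ 3 / m ^ 2)) by (apply Rabs_le; lra).
    unfold E. lra. }
  assert (Db : Rabs (Psi M (w + xi) - Psi M w) <= 32 * E).
  { rewrite Psi_Phi. fold m.
    assert (S1 : Rabs (Phi m (w + xi) - Phi m w) <= 3 * w / m).
    { apply shift_bound; try lra. rewrite Rabs_right; lra. }
    assert (E5 : 3 * w / m = 3 * (w / m)) by (field; lra). unfold E. lra. }
  set (f0 := exp (Psi M w)).
  assert (Hf0 : 0 < f0) by apply exp_pos.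
  assert (Ea : exp (Psi M (- u + xi)) = f0 * exp (Psi M (- u + xi) - Psi M w)).
  { unfold f0. rewrite <- exp_plus. f_equal. ring. }
  assert (Eb : exp (Psi M (w + xi)) = f0 * exp (Psi M (w + xi) - Psi M w)).
  { unfold f0. rewrite <- exp_plus. f_equal. ring. }
  rewrite Ea, Eb.
  set (da := Psi M (- u + xi) - Psi M w) in *. set (db := Psi M (w + xi) - Psi M w) in *.
  replace (f0 * exp da - f0 * exp db) with (f0 * ((exp da - 1) - (exp db - 1))) by ring.
  rewrite Rabs_mult, (Rabs_right f0) by lra.
  rewrite (Rmult_comm _ f0). apply Rmult_le_compat_l; [lra|].
  pose proof (exp_m1 da). pose proof (exp_m1 db).
  assert (exp (Rabs da) <= exp 64) by (apply exp_mono; lra).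
  assert (exp (Rabs db) <= exp 64) by (apply exp_mono; lra).
  assert (Rabs da * exp (Rabs da) <= 32 * E * exp 64).
  { apply Rmult_le_compat; try lra. apply Rabs_pos. left; apply exp_pos. }
  assert (Rabs db * exp (Rabs db) <= 32 * E * exp 64).
  { apply Rmult_le_compat; try lra. apply Rabs_pos. left; apply exp_pos. }
  assert (Tr : forall p q, Rabs (p - q) <= Rabs p + Rabs q) by (intros; unfold Rabs; repeat destruct Rcase_abs; lra).
  eapply Rle_trans. apply Tr. fold E. unfold C0. lra.
Qed.

Lemma part1_A M w x1 x2 : 1 <= w -> w ^ 3 <= INR (S M) ^ 2 -> INR (S M) < 4 * w + 1 ->
  Rabs (fm (S M) x1 - fm (S M) x2)
    <= C0 * (w / INR (S M) + w ^ 3 / INR (S M) ^ 2) * fm (S M) (1 - w).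
Proof.
  intros Hw H3 Hh. set (h := INR (S M)) in *.
  assert (Hh0 : 1 <= h) by (unfold h; rewrite S_INR; pose proof (pos_INR M); lra).
  pose proof (fm_le_1 M x1). pose proof (fm_le_1 M x2).
  pose proof (fm_nonneg (S M) x1). pose proof (fm_nonneg (S M) x2).
  pose proof (fm_1_le M w ltac:(lra)). pose proof (fm_nonneg (S M) (1 - w)).
  set (f0 := fm (S M) (1 - w)) in *.
  assert (Hw25 : w <= 25).
  { assert (h ^ 2 <= (5 * w) ^ 2) by (apply pow_incr; lra).
    assert (w ^ 3 <= 25 * w ^ 2) by (simpl in *; lra).
    assert (0 < w ^ 2) by (apply pow_lt; lra). simpl in *. nra. }
  assert (HE : 1 / 5 <= w / h).
  { apply Rmult_le_reg_r with h; [lra|]. replace (w / h * h) with w by (field; lra). lra. }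
  assert (0 <= w ^ 3 / h ^ 2) by (apply Rdiv_le_0_compat; [apply pow_le|apply pow_lt]; lra).
  assert (exp w <= exp 64) by (apply exp_mono; lra).
  assert (Hm : Rabs (fm (S M) x1 - fm (S M) x2) <= fm (S M) 1) by (apply Rabs_le; lra).
  eapply Rle_trans; [exact Hm|]. eapply Rle_trans; [eassumption|].
  unfold C0. pose proof (exp_pos 64).
  apply Rmult_le_compat_r; [lra|].
  assert (1 <= 64 * (w / h + w ^ 3 / h ^ 2)) by lra. nra.
Qed.

Theorem lemma7 :
  exists C : R, 0 < C /\
  forall (n : nat) (w b xi : R),
    (100 <= n)%nat ->
    1 <= w -> w <= INR n / 10 ->
    is_b (n + 1) w b ->
    0 <= xi <= 1 ->
    (* (i) *)
    (forall h : nat,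
        Rpower w (3 / 2) <= INR h -> (h <= n)%nat ->
        Rabs (fm h (1 + w - b - xi) - fm h (1 - w - xi))
          <= C * (w / INR h + w ^ 3 / INR h ^ 2) * fm h (1 - w))
    /\
    (* (ii) *)
    (2 * sqrt (INR n) <= w ->
     forall k : nat,
       (1 <= k)%nat -> INR k <= INR n - 3 * w ->
       (exists (th : nat -> R) (t : R),
          (forall j : nat, (n - k <= j <= n)%nat -> Rabs (th j) <= 1) /\
          Rabs t <= 1 /\
          fm (n + 1 - k) (1 + w - b - xi) =
            fm (n + 1) (1 - w) *
            exp (sum_range (n - k) n
                   (fun j => / (2 * INR j) * (1 - w ^ 2 / INR j)
                             + th j * C * (w ^ 3 / INR j ^ 3))
                 + t * C * (w / INR n)))
       /\
       (exists (th : nat -> R) (t : R),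
          (forall j : nat, (n - k <= j <= n)%nat -> Rabs (th j) <= 1) /\
          Rabs t <= 1 /\
          fm (n + 1 - k) (1 - w - xi) =
            fm (n + 1) (1 - w) *
            exp (sum_range (n - k) n
                   (fun j => / (2 * INR j) * (1 - w ^ 2 / INR j)
                             + th j * C * (w ^ 3 / INR j ^ 3))
                 + t * C * (w / INR n)))).
Proof.
  exists C0. split.
  { unfold C0. pose proof (exp_pos 64). lra. }
  intros n w b xi Hn Hw Hwn [Hb Hbeq] Hxi.
  assert (HN : 100 <= INR n) by (replace 100 with (INR 100) by (simpl; lra); apply INR_ge; lia).
  replace (n + 1)%nat with (S n) in * by lia.
  set (u := w - b).
  assert (Hu : 0 <= u <= w) by (unfold u; lra).
  assert (F0 : fm (S n) (1 - w) = exp (Psi n w)) by (apply fm_repr; lra).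
  assert (F1 : fm (S n) (1 + w - b) = exp (Psi n (- u))).
  { replace (1 + w - b) with (1 - - u) by (unfold u; ring). apply fm_repr; lra. }
  assert (HPsi : Psi n w = Psi n (- u)).
  { rewrite <- (ln_exp (Psi n w)), <- (ln_exp (Psi n (- u))). rewrite <- F0, <- F1, Hbeq. reflexivity. }
  assert (HPhi : Phi (INR n) w = Phi (INR n) (- u)).
  { pose proof (Psi_Phi n w (- u)). lra. }
  pose proof (b_bound (INR n) u w HPhi Hu ltac:(lra) ltac:(lra)) as BB.
  split.
  - intros h Hpow Hhn.
    assert (H3 : w ^ 3 <= INR h ^ 2).
    { assert (Hp : 0 < Rpower w (3 / 2)) by (unfold Rpower; apply exp_pos).
      assert (E : Rpower w (3 / 2) ^ 2 = w ^ 3).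
      { rewrite <- Rpower_pow by lra. rewrite Rpower_mult.
        replace (3 / 2 * INR 2) with (INR 3) by (simpl; field). apply Rpower_pow. lra. }
      rewrite <- E. apply pow_incr. lra. }
    destruct h as [|M].
    { simpl in H3. assert (1 <= w ^ 3) by (apply pow_R1_Rle; lra). lra. }
    replace (1 + w - b - xi) with (1 - (- u + xi)) by (unfold u; ring).
    replace (1 - w - xi) with (1 - (w + xi)) by ring.
    destruct (Rle_dec (4 * w + 1) (INR (S M))) as [Hr|Hr].
    + apply (part1_B n M w u xi); auto; lra.
    + apply part1_A; lra.
  - intros Hsq k Hk Hkn.
    assert (Hw2 : 4 * INR n <= w ^ 2).
    { assert (0 <= sqrt (INR n)) by apply sqrt_pos.
      assert ((2 * sqrt (INR n)) ^ 2 <= w ^ 2) by (apply pow_incr; lra).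
      replace ((2 * sqrt (INR n)) ^ 2) with (4 * (sqrt (INR n) * sqrt (INR n))) in H0 by ring.
      rewrite sqrt_sqrt in H0 by lra. lra. }
    assert (Hkn' : (k <= n)%nat) by (apply INR_le; lra).
    replace (S n - k)%nat with (S (n - k)) by lia.
    assert (HA : 3 * w <= INR (n - k)) by (rewrite minus_INR by lia; lra).
    assert (HC : 61 <= C0) by (unfold C0; pose proof (exp_ineq1_le 64); lra).
    split.
    + replace (1 + w - b - xi) with (1 - (- u + xi)) by (unfold u; ring).
      rewrite fm_repr by lra. rewrite F0, HPsi.
      apply (part2_exists n k w xi (- u) C0); auto; try lra.
      * rewrite Rabs_Ropp, Rabs_right; lra.
      * apply Rabs_le. nra.
    + replace (1 - w - xi) with (1 - (w + xi)) by ring.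
      rewrite fm_repr by lra. rewrite F0.
      apply (part2_exists n k w xi w C0); auto; try lra.
      * rewrite Rabs_right; lra.
      * apply Rabs_le. assert (0 <= 8 * w ^ 3 / INR n) by (apply Rdiv_le_0_compat; [assert (0 <= w^3) by (apply pow_le; lra); lra|lra]). nra.
Qed.
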